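(* Let $k$ be a positive integer and let $T$ be a 1-optimal out-branching of a digraph $D$ with $|\mathrm{Leaf}(T)|\leq k-1$. If $|\mathrm{Head}(\mathrm{Back}_D^T(z))|\leq 3k-1$ for every vertex $z\in V(D)$, then a tree decomposition $(X,T)$ of $D$ (using $T$, as an undirected tree, as the decomposition tree) of width at most $6k-5$ can be constructed.
   Context: An out-tree is a subgraph that is a tree (ignoring directions) with one vertex (the root) of in-degree $0$ and all others of in-degree $1$; an out-branching is a spanning out-tree. $\mathrm{Leaf}(T)$ is the set of vertices of out-degree $0$ in $T$. Write $u\preceq_T v$ if $v$ is reachable from $u$ in $T$, $u\prec_T v$ if also $u\ne v$. $\mathrm{Back}_{D}^T(z)=\{(a,b)\in A(D): b\prec_T z\preceq_T a\}$, and $\mathrm{Head}(B)$ is the set of heads of arcs of $B$. $T$ is 1-optimal if no replacement of the arc of $T$ entering a non-root vertex $b$ by another arc $(a,b)\in A(D)$ yields an out-branching with more leaves. A tree decomposition of a digraph is a tree with bags of vertices covering all vertices, such that every arc has both endpoints in some bag and the bags containing any given vertex form a subtree; its width is the maximum bag size minus one. *)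

(* Defs.v *)
From mathcomp Require Import all_boot.
Set Implicit Arguments.
Unset Strict Implicit.
Unset Printing Implicit Defensive.

Section Digraphs.
Variable V : finType.

(* T is an out-branching of D with root r: T is a sub-digraph of D (same
   vertex set), r has in-degree 0 in T, every other vertex has in-degree
   exactly 1 in T, and every vertex is reachable from r in T (so T, with
   |V|-1 arcs and connected, is a spanning tree when directions are ignored). *)
Definition out_branching_root (D T : rel V) (r : V) : Prop :=
  [/\ forall a b, T a b -> D a b,
      forall a, ~~ T a r,
      forall v, v != r -> #|[set a | T a v]| = 1
    & forall v, connect T r v].

Definition out_branching (D T : rel V) : Prop :=
  exists r, out_branching_root D T r.

Definition is_root (T : rel V) (r : V) : bool := [forall a, ~~ T a r].

Definition Leaf (T : rel V) : {set V} := [set v | [forall w, ~~ T v w]].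

Definition preceq (T : rel V) (u v : V) : bool := connect T u v.
Definition prec (T : rel V) (u v : V) : bool := connect T u v && (u != v).

Definition HeadBack (D T : rel V) (z : V) : {set V} :=
  [set b | [exists a, [&& D a b, prec T b z & preceq T z a]]].

Definition replace_arc (T : rel V) (a b : V) : rel V :=
  fun x y => (T x y && (y != b)) || ((x == a) && (y == b)).

Definition one_optimal (D T : rel V) : Prop :=
  forall a b, D a b -> ~~ is_root T b ->
    out_branching D (replace_arc T a b) ->
    #|Leaf (replace_arc T a b)| <= #|Leaf T|.

Definition undirected (T : rel V) : rel V := fun x y => T x y || T y x.

Definition tree_decomposition (D T : rel V) (X : V -> {set V}) : Prop :=
  [/\ forall v, exists t, v \in X t,
      forall a b, D a b -> exists t, (a \in X t) && (b \in X t)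
    & forall v s t, v \in X s -> v \in X t ->
        connect [rel x y | [&& v \in X x, v \in X y & undirected T x y]] s t].

Definition td_width (X : V -> {set V}) : nat := (\max_(t : V) #|X t|).-1.

End Digraphs.

(* Main.v *)
Require Import Defs.
From mathcomp Require Import all_boot.
From mathcomp Require Import zify.

Set Implicit Arguments.
Unset Strict Implicit.
Unset Printing Implicit Defensive.

Definition od (V : finType) (T : rel V) (v : V) := #|[set w | T v w]|.

Lemma cardS (V : finType) (P : pred V) : #|[set w | P w]| = \sum_w (P w : nat).
Proof.
rewrite -sum1_card big_mkcond /=; apply: eq_bigr => w _; rewrite inE; by case: (P w).
Qed.

Lemma leaf_od (V : finType) (T : rel V) v : (v \in Leaf T) = (od T v == 0).
Proof.
rewrite inE /od cards_eq0; apply/forallP/eqP => [H|H].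
  by apply/setP => w; rewrite !inE; apply/negbTE/H.
move=> w; apply/negP => Tvw.
have : w \in [set w | T v w] by rewrite inE.
by rewrite H inE.
Qed.

Lemma leaf_count (V : finType) (T : rel V) r :
  (forall a, ~~ T a r) -> (forall v, v != r -> #|[set a | T a v]| = 1) ->
  #|Leaf T| = (\sum_v (od T v).-1).+1.
Proof.
move=> H2 H3.
have E1 : \sum_v od T v = \sum_w #|[set a | T a w]|.
  rewrite /od; under eq_bigr do rewrite cardS.
  rewrite exchange_big /=; apply: eq_bigr => w _; by rewrite cardS.
have E2 : \sum_w #|[set a | T a w]| = \sum_w (w != r : nat).
  apply: eq_bigr => w _; case: eqP => [->|/eqP ne]; last by rewrite H3.
  rewrite cardS big1 // => a _; by rewrite (negbTE (H2 a)).
have E3 : \sum_(w : V) (w != r : nat) + 1 = \sum_(w : V) 1.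
  rewrite (bigD1 r) //= [in RHS](bigD1 r) //= eqxx add0n addnC.
  congr (_ + _); apply: eq_bigr => w ->; done.
have A1 : \sum_v (od T v : nat) = \sum_v (0 < od T v : nat) + \sum_v (od T v).-1.
  by rewrite -big_split; apply: eq_bigr => v _; case: (od T v).
have A2 : \sum_v (od T v == 0 : nat) + \sum_v (0 < od T v : nat) = \sum_(v : V) 1.
  by rewrite -big_split; apply: eq_bigr => v _; case: (od T v).
have A4 : #|Leaf T| = \sum_v (od T v == 0 : nat).
  rewrite -cardS; apply: eq_card => v; by rewrite leaf_od inE.
lia.
Qed.

Definition Fset (V : finType) (T : rel V) := [set b | [exists p, T p b && (1 < od T p)]].

Lemma F_card (V : finType) (T : rel V) : #|Fset T| <= 2 * \sum_v (od T v).-1.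
Proof.
apply: (@leq_trans (\sum_p ((1 < od T p) * od T p))).
  have -> : \sum_p ((1 < od T p) * od T p) =
            \sum_p \sum_b ((T p b && (1 < od T p)) : nat).
    apply: eq_bigr => p _; case: (1 < od T p) => /=.
      by rewrite mul1n /od cardS; apply: eq_bigr => b _; rewrite andbT.
    by rewrite mul0n big1 // => b _; rewrite andbF.
  rewrite exchange_big /= cardS; apply: leq_sum => b _.
  case: existsP => [[p Hp]|_] //.
  by rewrite (bigD1 p) //= Hp leq_addr.
rewrite big_distrr /=; apply: leq_sum => p _; case: (od T p) => [|[|n]] //=; lia.
Qed.

Lemma path_mem (V : finType) (e : rel V) x p y :
  path e x p -> y \in x :: p -> connect e x y && connect e y (last x p).
Proof.
elim: p x => [|z p IH] x /=.
  by move=> _; rewrite inE => /eqP ->; rewrite connect0.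
case/andP => exz pz; rewrite inE => /orP [/eqP ->|yin].
  rewrite connect0 /=; apply: connect_trans (connect1 exz) _.
  by apply/connectP; exists p.
case/andP: (IH z pz yin) => c1 c2; rewrite c2 andbT.
exact: connect_trans (connect1 exz) c1.
Qed.

Lemma path_lift (V : finType) (e e' : rel V) (P : pred V) x p :
  path e x p -> {in x :: p, forall y, P y} ->
  (forall y z, P y -> P z -> e y z -> e' y z) -> path e' x p.
Proof.
move=> + + H; elim: p x => [|z p IH] x //= /andP [exz pz] Hin.
rewrite H ?Hin ?inE ?eqxx ?orbT //=.
apply: IH => // y yin; apply: Hin; by rewrite inE yin orbT.
Qed.

Theorem proposition9 (V : finType) (D T : rel V) (k : nat) :
  0 < k ->
  out_branching D T ->
  one_optimal D T ->
  #|Leaf T| <= k - 1 ->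
  (forall z : V, #|HeadBack D T z| <= 3 * k - 1) ->
  exists X : V -> {set V}, tree_decomposition D T X /\ td_width X <= 6 * k - 5.
Proof.
move=> k0 [r [H1 H2 H3 H4]] Hopt HL HB.
pose F := Fset T.
pose X := fun t => [set t] :|: [set a | T a t] :|: HeadBack D T t :|: Leaf T :|: F.
have memX : forall v t, (v \in X t) =
   [|| v == t, T v t, v \in HeadBack D T t, v \in Leaf T | v \in F].
  by move=> v t; rewrite /X !inE -!orbA.
have LC := leaf_count H2 H3.
have FC := F_card T.
exists X; split; last first.
  rewrite /td_width.
  have : \max_t #|X t| <= 6 * k - 4.
    apply/bigmax_leqP => t _.
    have P1 : #|[set a | T a t]| <= 1.
      case: (eqVneq t r) => [->|tr]; last by rewrite H3.
      by rewrite cardS big1 // => a _; rewrite (negbTE (H2 a)).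
    have U := fun (A B : {set V}) => (leq_card_setU A B).1.
    have := U ([set t] :|: [set a | T a t] :|: HeadBack D T t :|: Leaf T) F.
    have := U ([set t] :|: [set a | T a t] :|: HeadBack D T t) (Leaf T).
    have := U ([set t] :|: [set a | T a t]) (HeadBack D T t).
    have := U [set t] [set a | T a t].
    rewrite cards1 /X.
    have := HB t. rewrite /F. lia.
  lia.
have brT : forall a b, D a b -> ~~ connect T b a ->
    out_branching D (replace_arc T a b).
  move=> a b Dab nC.
  have br : b != r by apply: contraNneq nC => ->; apply: H4.
  have Ca : connect (replace_arc T a b) r a.
    have L : forall p x, path T x p -> connect (replace_arc T a b) r x ->
        connect (replace_arc T a b) r (last x p) \/ connect T b (last x p).
      elim => [|y p IH] x /=; first by left.
      case/andP => Txy Pyp Crx; case: (eqVneq y b) => [eyb|nyb].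
        by right; rewrite -eyb; apply/connectP; exists p.
      apply: IH => //; apply: connect_trans Crx (connect1 _).
      by rewrite /replace_arc Txy nyb.
    move/connectP: (H4 a) => [p Pp Ea].
    case: (L p r Pp (connect0 _ _)); rewrite -Ea //.
    by move=> C; case/negP: nC.
  exists r; split.
  - move=> x y; rewrite /replace_arc => /orP [/andP [/H1 //] | /andP [/eqP -> /eqP ->] //].
  - move=> x; rewrite /replace_arc negb_or (negbTE (H2 x)) /= [r == b]eq_sym (negbTE br).
    by rewrite andbF.
  - move=> v vr; case: (eqVneq v b) => [->|vb].
      rewrite (_ : [set x | replace_arc T a b x b] = [set a]) ?cards1 //.
      by apply/setP => x; rewrite !inE /replace_arc eqxx andbF andbT.
    rewrite -(H3 v vr); apply: eq_card => x.
    by rewrite !inE /replace_arc (negbTE vb) andbT andbF orbF.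
  - move=> v; move/connectP: (H4 v) => [p Pp ->].
    have L2 : forall p x, path T x p -> connect (replace_arc T a b) r x ->
        connect (replace_arc T a b) r (last x p).
      elim => [|y q IH] x //= /andP [Txy Pyp] Crx.
      apply: IH => //; case: (eqVneq y b) => [->|nyb].
        by apply: connect_trans Ca (connect1 _); rewrite /replace_arc !eqxx orbT.
      by apply: connect_trans Crx (connect1 _); rewrite /replace_arc Txy nyb.
    exact: L2 Pp (connect0 _ _).
have optF : forall a b, D a b -> ~~ connect T b a -> ~~ T a b ->
    a \notin Leaf T -> b \in F.
  move=> a b Dab nC nT nL; apply/negPn/negP => nF.
  have br : b != r by apply: contraNneq nC => ->; apply: H4.
  have [p Tpb] : exists p, T p b.
    move: (H3 b br) => /eqP /cards1P [p Ep]; exists p.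
    have : p \in [set x | T x b] by rewrite Ep set11.
    by rewrite inE.
  have only : forall w, T p w -> w = b.
    move=> w Tpw.
    have : od T p <= 1.
      by move: nF; rewrite inE negb_exists => /forallP /(_ p); rewrite Tpb /= -leqNgt.
    move/card_le1_eqP => Hp.
    by apply: Hp; rewrite inE.
  have pa : p != a by apply: contraNneq nT => <-.
  have nr : ~~ is_root T b.
    by rewrite /is_root negb_forall; apply/existsP; exists p; rewrite Tpb.
  have := Hopt a b Dab nr (brT a b Dab nC).
  suff : #|Leaf T| < #|Leaf (replace_arc T a b)| by move=> h1 h2; lia.
  apply: proper_card; apply/properP; split.
    apply/subsetP => v; rewrite !inE => /forallP Hv; apply/forallP => w.
    rewrite /replace_arc negb_or negb_and (negbTE (Hv w)) /=.
    case: (eqVneq v a) => [eva|//]; case/negP: nL; rewrite -eva inE.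
    exact/forallP.
  exists p.
    rewrite inE; apply/forallP => w; rewrite /replace_arc negb_or (negbTE pa) /=.
    case Tpw: (T p w) => //=; by rewrite (only w Tpw) eqxx.
  by rewrite inE negb_forall; apply/existsP; exists b; rewrite Tpb.
split.
- by move=> v; exists v; rewrite memX eqxx.
- move=> a b Dab; case: (boolP (connect T b a)) => Cba.
    case: (eqVneq b a) => [<-|nba].
      by exists b; rewrite memX eqxx.
    exists a; rewrite !memX eqxx /=.
    apply/or3P; apply: Or33; apply/orP; left.
    rewrite inE; apply/existsP; exists a.
    by rewrite Dab /prec /preceq Cba nba connect0.
  case: (boolP (T a b)) => Tab.
    by exists b; rewrite !memX Tab eqxx orbT.
  case: (boolP (a \in Leaf T)) => La.
    by exists b; rewrite !memX La eqxx !orbT.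
  exists a; by rewrite !memX (optF a b Dab Cba Tab La) eqxx !orbT.
- move=> v.
  pose R := [rel x y | [&& v \in X x, v \in X y & undirected T x y]].
  have symR : symmetric R.
    move=> x y /=; rewrite /undirected orbC.
    by case: (v \in X x); case: (v \in X y).
  have all_v : (v \in Leaf T) || (v \in F) -> forall t, connect R v t.
    move=> Hv.
    have allX : forall t, v \in X t by move=> t; rewrite memX Hv !orbT.
    have rt : forall t, connect R r t.
      move=> t; move/connectP: (H4 t) => [p Pp ->]; apply/connectP; exists p => //.
      by apply: sub_path Pp => x y Txy; rewrite /= !allX /undirected Txy.
    move=> t; apply: connect_trans (rt t); rewrite (sym_connect_sym symR).
    exact: rt.
  have Cvt : forall t, v \in X t -> connect R v t.
    move=> t; rewrite memX.
    case/orP => [/eqP ->|]; first exact: connect0.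
    case/orP => [Tvt|].
      by apply: connect1; rewrite /= /undirected !memX eqxx Tvt /= ?orbT.
    case/orP => [HH|Hv]; last exact: all_v.
    move: HH; rewrite /HeadBack inE => /existsP [a /and3P [Dav Hp Cta]].
    move: Hp => /andP [Cvt0 nvt].
    move/connectP: Cvt0 => [p Pp Et]; apply/connectP; exists p => //.
    apply: (@path_lift _ T R (fun y => v \in X y) v p Pp).
      move=> y yin; case/andP: (path_mem Pp yin) => c1 c2.
      case: (eqVneq v y) => [->|nvy]; first by rewrite memX eqxx.
      rewrite memX; apply/orP; right; apply/orP; right; apply/orP; left.
      rewrite inE; apply/existsP; exists a.
      rewrite Dav /prec /preceq c1 nvy /=.
      by apply: connect_trans Cta; rewrite Et.
    by move=> y z Py Pz Tyz; rewrite /= Py Pz /undirected Tyz.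
  move=> s t Hs Ht; apply: connect_trans (Cvt t Ht).
  by rewrite (sym_connect_sym symR); apply: Cvt.
Qed.
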